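(* Let $N\geq 1$ and let $a_1,\dots,a_N$ be real numbers with $1<a_1<a_2<\cdots<a_N$; set $a_0=1$ and $\mathbf{a}=(a_1,\dots,a_N)$. Let $\delta>0$. Then: (a) If $f:[0,\delta]\to\mathbb{R}$ is a solution of $f(x)+f(a_1x)+\cdots+f(a_Nx)=0$ on $[0,\delta]$ and $f\in C^{(m(\mathbf{a}))}[0,\delta]$, then $f\equiv 0$ on $[0,\delta]$. (b) If $f:[-\delta,0]\to\mathbb{R}$ is a solution of $f(x)+f(a_1x)+\cdots+f(a_Nx)=0$ on $[-\delta,0]$ and $f\in C^{(m(\mathbf{a}))}[-\delta,0]$, then $f\equiv 0$ on $[-\delta,0]$.
   Context: For an interval $I\subseteq\mathbb{R}$, a function $f:I\to\mathbb{R}$ is called a solution of $f(x)+f(a_1x)+\cdots+f(a_Nx)=0$ on $I$ if $f(x)+f(a_1x)+\cdots+f(a_Nx)=0$ holds for every $x$ such that $\{x,a_1x,\dots,a_Nx\}\subseteq I$. With $a_0=1$, define the natural number $m(\mathbf{a})=\min\{m\in\mathbb{N}: \sum_{k=0}^{N-1}(a_k/a_N)^m<1\}$ (well defined since $0<a_k/a_N<1$ for $0\le k\le N-1$). $C^{(m)}[\alpha,\beta]$ denotes the $m$ times continuously differentiable functions on $[\alpha,\beta]$ (one-sided derivatives at endpoints). *)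

(* Defs.v *)
From Stdlib Require Import Reals.
Open Scope R_scope.

Definition coef (a : nat -> R) (k : nat) : R :=
  match k with O => 1 | S _ => a k end.

Definition is_solution (N : nat) (a : nat -> R) (lo hi : R) (f : R -> R) : Prop :=
  forall x : R,
    (forall k, (k <= N)%nat -> lo <= coef a k * x <= hi) ->
    sum_f_R0 (fun k => f (coef a k * x)) N = 0.

Definition m_cond (N : nat) (a : nat -> R) (m : nat) : Prop :=
  sum_f_R0 (fun k => (coef a k / a N) ^ m) (N - 1) < 1.

Definition is_m_of (N : nat) (a : nat -> R) (m : nat) : Prop :=
  m_cond N a m /\ forall m', (m' < m)%nat -> ~ m_cond N a m'.

Definition cont_on (lo hi : R) (g : R -> R) : Prop :=
  forall x, lo <= x <= hi ->
    limit1_in g (fun y => lo <= y <= hi) (g x) x.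

Definition deriv_on (lo hi : R) (f g : R -> R) : Prop :=
  forall x, lo <= x <= hi ->
    limit1_in (fun y => (f y - f x) / (y - x))
              (fun y => lo <= y <= hi /\ y <> x) (g x) x.

Definition Cm_on (m : nat) (lo hi : R) (f : R -> R) : Prop :=
  exists D : nat -> R -> R,
    (forall x, lo <= x <= hi -> D O x = f x) /\
    (forall k, (k < m)%nat -> deriv_on lo hi (D k) (D (S k))) /\
    cont_on lo hi (D m).

(* Main.v *)
Require Import Defs.
From Stdlib Require Import Reals Lra Lia.
Open Scope R_scope.

Lemma lim_ext (f g : R -> R) (D : R -> Prop) l x :
  (forall y, D y -> f y = g y) -> limit1_in f D l x -> limit1_in g D l x.
Proof.
  unfold limit1_in, limit_in; intros He H eps Heps.
  destruct (H eps Heps) as [alp [Ha H2]]; exists alp; split; auto.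
  intros y [Dy Hy]; rewrite <- He by auto; apply H2; auto.
Qed.

Lemma deriv_ext_r lo hi f g h :
  deriv_on lo hi f g -> (forall x, lo <= x <= hi -> g x = h x) -> deriv_on lo hi f h.
Proof. unfold deriv_on; intros H E x Hx; rewrite <- E by auto; auto. Qed.

Lemma deriv_plus lo hi f f' g g' :
  deriv_on lo hi f f' -> deriv_on lo hi g g' ->
  deriv_on lo hi (fun y => f y + g y) (fun y => f' y + g' y).
Proof.
  unfold deriv_on; intros Hf Hg x Hx.
  eapply lim_ext; [|apply limit_plus; [apply Hf|apply Hg]; auto].
  intros y _; simpl; unfold Rdiv; ring.
Qed.

Lemma deriv_scal lo hi c f f' :
  deriv_on lo hi f f' -> deriv_on lo hi (fun y => c * f y) (fun y => c * f' y).
Proof.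
  unfold deriv_on; intros Hf x Hx.
  eapply lim_ext; [|apply limit_mul; [apply (limit_free (fun _ => c) _ x x)|apply Hf]; auto].
  intros y _; simpl; unfold Rdiv; ring.
Qed.

Lemma deriv_comp lo hi b f f' :
  deriv_on lo hi f f' -> 0 < b -> (forall y, lo <= y <= hi -> lo <= b * y <= hi) ->
  deriv_on lo hi (fun y => f (b * y)) (fun y => b * f' (b * y)).
Proof.
  unfold deriv_on, limit1_in, limit_in; simpl; unfold Rdist.
  intros Hf Hb HI x Hx eps He.
  destruct (Hf (b*x) (HI x Hx) (eps/b)) as [alp [Ha H2]].
  { apply Rdiv_lt_0_compat; lra. }
  exists (alp / b); split. { apply Rdiv_lt_0_compat; lra. }
  intros y [[Hy Hyx] Hd].
  assert (Hyx' : y - x <> 0) by lra.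
  assert (Hbb : b * y - b * x <> 0).
  { replace (b*y - b*x) with (b*(y-x)) by ring. apply Rmult_integral_contrapositive; split; lra. }
  assert (Hq := H2 (b*y)).
  replace ((f (b * y) - f (b * x)) / (y - x) - b * f' (b * x))
    with (b * ((f (b * y) - f (b * x)) / (b*y - b*x) - f' (b * x))) by (field; auto).
  rewrite Rabs_mult, (Rabs_pos_eq b) by lra.
  assert (Hlt : Rabs ((f (b * y) - f (b * x)) / (b * y - b * x) - f' (b * x)) < eps / b).
  { apply Hq. split. split; [apply HI; auto| intro E; apply Hbb; lra].
    replace (b*y - b*x) with (b*(y-x)) by ring. rewrite Rabs_mult, (Rabs_pos_eq b) by lra.
    apply (Rmult_lt_compat_l b) in Hd; [|lra]. replace (b * (alp/b)) with alp in Hd by (field; lra). lra. }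
  apply (Rmult_lt_compat_l b) in Hlt; [|lra]. replace (b * (eps/b)) with eps in Hlt by (field; lra). lra.
Qed.

Lemma deriv_sum lo hi (F F' : nat -> R -> R) n :
  (forall k, (k <= n)%nat -> deriv_on lo hi (F k) (F' k)) ->
  deriv_on lo hi (fun y => sum_f_R0 (fun k => F k y) n) (fun y => sum_f_R0 (fun k => F' k y) n).
Proof.
  induction n; intros H; simpl.
  - apply H; lia.
  - apply deriv_plus; [apply IHn; intros; apply H; lia | apply H; lia].
Qed.

Lemma deriv_zero lo hi g g' :
  lo < hi -> deriv_on lo hi g g' -> (forall y, lo <= y <= hi -> g y = 0) ->
  forall x, lo <= x <= hi -> g' x = 0.
Proof.
  unfold deriv_on, limit1_in, limit_in; simpl; unfold Rdist.
  intros Hlh H Z x Hx.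
  destruct (Req_dec (g' x) 0) as [E|E]; auto; exfalso.
  destruct (H x Hx (Rabs (g' x))) as [alp [Ha H2]]. { apply Rabs_pos_lt; auto. }
  assert (Hy : exists y, lo <= y <= hi /\ y <> x /\ Rabs (y - x) < alp).
  { destruct (Rlt_dec x hi).
    - assert (Hm := Rmin_pos (alp/2) (hi - x) ltac:(lra) ltac:(lra)).
      assert (Hm1 := Rmin_l (alp/2) (hi - x)). assert (Hm2 := Rmin_r (alp/2) (hi - x)).
      exists (x + Rmin (alp/2) (hi-x)); split; [lra|split;[lra|]].
      rewrite Rabs_pos_eq; lra.
    - assert (Hm := Rmin_pos (alp/2) (x - lo) ltac:(lra) ltac:(lra)).
      assert (Hm1 := Rmin_l (alp/2) (x - lo)). assert (Hm2 := Rmin_r (alp/2) (x - lo)).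
      exists (x - Rmin (alp/2) (x-lo)); split; [lra|split;[lra|]].
      rewrite Rabs_left; lra. }
  destruct Hy as [y [Hy1 [Hy2 Hy3]]].
  assert (Hq := H2 y (conj (conj Hy1 Hy2) Hy3)).
  rewrite (Z y Hy1), (Z x Hx) in Hq.
  replace ((0 - 0) / (y - x) - g' x) with (- g' x) in Hq by (unfold Rdiv; ring).
  rewrite Rabs_Ropp in Hq; lra.
Qed.

Lemma deriv_interior lo hi f f' x :
  deriv_on lo hi f f' -> lo < x < hi -> derivable_pt_lim f x (f' x).
Proof.
  unfold deriv_on, limit1_in, limit_in, derivable_pt_lim; simpl; unfold Rdist.
  intros H Hx eps He.
  destruct (H x ltac:(lra) eps He) as [alp [Ha H2]].
  assert (Hm := Rmin_pos alp (Rmin (x - lo) (hi - x)) ltac:(lra) (Rmin_pos (x - lo) (hi - x) ltac:(lra) ltac:(lra))).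
  exists (mkposreal _ Hm); simpl; intros h Hh Hl.
  assert (Hm1 := Rmin_l alp (Rmin (x - lo) (hi - x))). assert (Hm2 := Rmin_r alp (Rmin (x - lo) (hi - x))).
  assert (Hm3 := Rmin_l (x - lo) (hi - x)). assert (Hm4 := Rmin_r (x - lo) (hi - x)).
  apply Rabs_def2 in Hl as Hl'. destruct Hl'.
  assert (Hq := H2 (x + h)). replace (x + h - x) with h in Hq by ring.
  apply Hq; split; [split; [lra|lra] | lra].
Qed.

Lemma deriv_const lo hi f f' :
  deriv_on lo hi f f' -> (forall x, lo <= x <= hi -> f' x = 0) ->
  forall u v, lo < u < hi -> lo < v < hi -> f u = f v.
Proof.
  intros H Z.
  assert (K : forall u v, lo < u < hi -> lo < v < hi -> u < v -> f u = f v).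
  { intros u v Hu Hv Huv.
    destruct (MVT_cor2 f f' u v Huv) as [c [Hc _]].
    - intros c Hc; apply (deriv_interior lo hi); auto; lra.
    - destruct (MVT_cor2 f f' u v Huv) as [c' [Hc' Hc'']].
      + intros c0 Hc0; apply (deriv_interior lo hi); auto; lra.
      + rewrite Z in Hc' by lra. lra. }
  intros u v Hu Hv. destruct (Rtotal_order u v) as [l|[e|g]].
  - auto.
  - subst; auto.
  - symmetry; auto.
Qed.

Lemma cont_max lo hi g :
  lo <= hi -> cont_on lo hi g ->
  exists x0, lo <= x0 <= hi /\ forall y, lo <= y <= hi -> Rabs (g y) <= Rabs (g x0).
Proof.
  intros Hlh Hc.
  set (cl := fun y => Rmax lo (Rmin hi y)).
  assert (Hcl : forall y, lo <= cl y <= hi).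
  { intros y; unfold cl, Rmax, Rmin; repeat destruct Rle_dec; lra. }
  assert (Hid : forall y, lo <= y <= hi -> cl y = y).
  { intros y Hy; unfold cl, Rmax, Rmin; repeat destruct Rle_dec; lra. }
  assert (Hlip : forall y z, Rabs (cl y - cl z) <= Rabs (y - z)).
  { intros y z; unfold cl, Rmax, Rmin; repeat destruct Rle_dec; unfold Rabs; repeat destruct Rcase_abs; lra. }
  assert (Hct : forall c, continuity_pt (fun y => g (cl y)) c).
  { intros c. unfold continuity_pt, continue_in, limit1_in, limit_in; simpl; unfold Rdist.
    intros eps He. destruct (Hc (cl c) (Hcl c) eps He) as [alp [Ha H2]].
    exists alp; split; auto. intros y [_ Hy].
    apply H2; split; [apply Hcl|]. eapply Rle_lt_trans; [apply Hlip|auto]. }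
  destruct (continuity_ab_maj (fun y => Rabs (g (cl y))) lo hi Hlh) as [Mx [HM HMx]].
  { intros c _. apply (continuity_pt_comp (fun y => g (cl y)) Rabs); auto. apply Rcontinuity_abs. }
  exists Mx; split; auto. intros y Hy. assert (T := HM y Hy). simpl in T.
  rewrite !Hid in T by auto. auto.
Qed.

Lemma mono (a : nat -> R) N :
  (forall k, (1 <= k)%nat -> (k < N)%nat -> a k < a (S k)) ->
  forall d i, (1 <= i)%nat -> (i + S d <= N)%nat -> a i < a (i + S d)%nat.
Proof.
  intros H; induction d; intros i Hi Hd.
  - replace (i + 1)%nat with (S i) by lia. apply H; lia.
  - apply Rlt_trans with (a (i + S d)%nat). apply IHd; lia.
    replace (i + S (S d))%nat with (S (i + S d)) by lia. apply H; lia.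
Qed.

Lemma coef_bounds (a : nat -> R) N :
  (1 <= N)%nat -> 1 < a 1%nat ->
  (forall k, (1 <= k)%nat -> (k < N)%nat -> a k < a (S k)) ->
  (forall k, (k <= N)%nat -> 1 <= coef a k <= a N) /\
  (forall k, (k < N)%nat -> coef a k < a N) /\ 1 < a N.
Proof.
  intros HN H1 Hm.
  assert (Ha : forall k, (1 <= k)%nat -> (k <= N)%nat -> 1 < a k).
  { intros k Hk1 Hk2. destruct (Nat.eq_dec k 1) as [->|]; auto.
    apply Rlt_trans with (a 1%nat); auto.
    replace k with (1 + S (k - 2))%nat by lia. apply (mono a N); auto; lia. }
  assert (HaN : 1 < a N) by (apply Ha; lia).
  assert (Hlt : forall k, (k < N)%nat -> coef a k < a N).
  { intros [|k] Hk; simpl; auto. replace N with (S k + S (N - S k - 1))%nat by lia.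
    apply (mono a N); auto; lia. }
  split; [|split; auto].
  intros [|k] Hk; simpl; [lra|]. split. left; apply Ha; lia.
  destruct (Nat.eq_dec (S k) N) as [<-|]; [lra|]. left; apply (Hlt (S k)); lia.
Qed.

Lemma scale_in lo hi b y : 0 < b <= 1 -> lo <= 0 <= hi -> lo <= y <= hi -> lo <= b * y <= hi.
Proof. intros; split; nra. Qed.

Lemma scale_open lo hi b y : 0 < b < 1 -> lo <= 0 <= hi -> lo <= y <= hi -> y <> 0 -> lo < b * y < hi.
Proof.
  intros Hb H0 Hy Hn. destruct (Rlt_dec 0 y); [split; nra|].
  assert (y < 0) by lra. split; nra.
Qed.

Lemma sum_split (G : nat -> R) n : (1 <= n)%nat -> sum_f_R0 G n = sum_f_R0 G (n-1) + G n.
Proof. intros; destruct n; [lia|]. replace (S n - 1)%nat with n by lia; reflexivity. Qed.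

Lemma sum_nonneg (G : nat -> R) n : (forall k, (k <= n)%nat -> 0 <= G k) -> 0 <= sum_f_R0 G n.
Proof.
  induction n; intros H; simpl. apply H; lia.
  assert (0 <= sum_f_R0 G n) by (apply IHn; intros; apply H; lia).
  assert (0 <= G (S n)) by (apply H; lia). lra.
Qed.

Lemma frac_bounds q p : 1 <= q -> q <= p -> 0 < q / p <= 1.
Proof.
  intros. split. apply Rdiv_lt_0_compat; lra.
  apply (Rmult_le_reg_r p); [lra|]. unfold Rdiv; rewrite Rmult_assoc, Rinv_l, Rmult_1_r; lra.
Qed.

Lemma frac_lt q p : 1 <= q -> q < p -> q / p < 1.
Proof.
  intros. apply (Rmult_lt_reg_r p); [lra|]. unfold Rdiv; rewrite Rmult_assoc, Rinv_l, Rmult_1_r; lra.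
Qed.

Lemma core N a m lo hi y0 f :
  (1 <= N)%nat -> 1 < a 1%nat ->
  (forall k, (1 <= k)%nat -> (k < N)%nat -> a k < a (S k)) ->
  m_cond N a m -> lo < hi -> lo <= 0 <= hi -> lo < y0 < hi -> y0 <> 0 ->
  is_solution N a lo hi f -> Cm_on m lo hi f -> forall x, lo <= x <= hi -> f x = 0.
Proof.
  intros HN H1 Hmo Hmc Hlh H0 Hy0 Hy0n Hsol HC.
  destruct (coef_bounds a N HN H1 Hmo) as [Hcb [Hclt HaN]].
  set (c := fun k => coef a k / a N).
  assert (Hc : forall k, (k <= N-1)%nat -> 0 < c k < 1).
  { intros k Hk; unfold c.
    assert (1 <= coef a k) by (apply Hcb; lia). assert (coef a k < a N) by (apply Hclt; lia).
    split; [apply frac_bounds; lra | apply frac_lt; lra]. }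
  assert (Hci : forall k y, (k <= N-1)%nat -> lo <= y <= hi -> lo <= c k * y <= hi).
  { intros k y Hk Hy; apply scale_in; auto. destruct (Hc k Hk); lra. }
  destruct HC as [D [HD0 [HDd HDc]]].
  assert (R0 : forall y, lo <= y <= hi -> f y + sum_f_R0 (fun k => f (c k * y)) (N-1) = 0).
  { intros y Hy. assert (Hs := Hsol (y / a N)).
    assert (Hx : forall k, coef a k * (y / a N) = (coef a k / a N) * y) by (intros; field; lra).
    assert (HcN : coef a N = a N) by (destruct N; [lia|reflexivity]).
    rewrite sum_split in Hs by auto.
    replace (coef a N * (y / a N)) with y in Hs by (rewrite HcN; field; lra).
    rewrite (sum_eq _ (fun k => f (c k * y))) in Hs by (intros; unfold c; rewrite Hx; reflexivity).
    enough (sum_f_R0 (fun k => f (c k * y)) (N - 1) + f y = 0) by lra.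
    apply Hs. intros k Hk. rewrite Hx. apply scale_in; auto. apply frac_bounds; apply Hcb; auto. }
  set (E := fun j y => D j y + sum_f_R0 (fun k => c k ^ j * D j (c k * y)) (N-1)).
  assert (Claim1 : forall j, (j <= m)%nat -> forall y, lo <= y <= hi -> E j y = 0).
  { induction j; intros Hj y Hy.
    - unfold E. simpl pow. rewrite HD0 by auto.
      rewrite (sum_eq _ (fun k => f (c k * y))). apply R0; auto.
      intros k Hk; rewrite Rmult_1_l, HD0; auto.
    - assert (Hder : deriv_on lo hi (E j) (E (S j))).
      { unfold E; cbv beta. eapply deriv_ext_r.
        - apply deriv_plus. apply HDd; lia.
          apply (deriv_sum lo hi (fun k y => c k ^ j * D j (c k * y))
                   (fun k y => c k ^ j * (c k * D (S j) (c k * y)))).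
          intros k Hk.
          apply (deriv_scal lo hi (c k ^ j) (fun y => D j (c k * y))).
          apply (deriv_comp lo hi (c k) (D j) (D (S j))).
          apply HDd; lia. destruct (Hc k Hk); lra. intros; apply Hci; auto.
        - intros x Hx. cbv beta. f_equal. apply sum_eq. intros; simpl; ring. }
      apply (deriv_zero lo hi (E j) (E (S j))); auto.
      intros; apply IHj; auto; lia. }
  assert (Claim2 : forall y, lo <= y <= hi -> D m y = 0).
  { destruct (cont_max lo hi (D m)) as [x0 [Hx0 Hmax]]; [lra|auto|].
    assert (HE := Claim1 m (le_n m) x0 Hx0). unfold E in HE.
    set (M := Rabs (D m x0)).
    assert (Heq : D m x0 = - sum_f_R0 (fun k => c k ^ m * D m (c k * x0)) (N-1)) by lra.
    assert (HMe : M = Rabs (sum_f_R0 (fun k => c k ^ m * D m (c k * x0)) (N-1)))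
      by (unfold M; rewrite Heq, Rabs_Ropp; reflexivity).
    assert (HM : M <= sum_f_R0 (fun k => c k ^ m) (N-1) * M).
    { rewrite HMe at 1. eapply Rle_trans; [apply sum_f_R0_triangle|].
      rewrite Rmult_comm, scal_sum. apply sum_Rle. intros k Hk.
      destruct (Hc k Hk).
      rewrite Rabs_mult, (Rabs_pos_eq (c k ^ m)) by (apply pow_le; lra).
      apply Rmult_le_compat_l. apply pow_le; lra. apply Hmax; auto. }
    assert (HM0 : M = 0).
    { assert (0 <= M) by apply Rabs_pos.
      assert (Hs1 : sum_f_R0 (fun k => c k ^ m) (N - 1) < 1) by exact Hmc.
      destruct (Req_dec M 0) as [e|e]; auto.
      assert (sum_f_R0 (fun k => c k ^ m) (N - 1) * M < 1 * M) by (apply Rmult_lt_compat_r; lra).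
      lra. }
    intros y Hy. destruct (Req_dec (D m y) 0) as [e|e]; auto.
    assert (Rabs (D m y) <= M) by auto. assert (0 < Rabs (D m y)) by (apply Rabs_pos_lt; auto). lra. }
  assert (Claim3 : forall i, (i <= m)%nat -> forall y, lo <= y <= hi -> D (m - i)%nat y = 0).
  { induction i; intros Hi y Hy.
    - rewrite Nat.sub_0_r; auto.
    - set (j := (m - S i)%nat). assert (HjS : S j = (m - i)%nat) by (unfold j; lia).
      assert (Hz : forall x, lo <= x <= hi -> D (S j) x = 0) by (intros; rewrite HjS; apply IHi; [lia|auto]).
      assert (Hdj : deriv_on lo hi (D j) (D (S j))) by (apply HDd; unfold j; lia).
      assert (Hconst := deriv_const lo hi _ _ Hdj Hz).
      assert (HS : 0 <= sum_f_R0 (fun k => c k ^ j) (N-1)).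
      { apply sum_nonneg; intros k Hk; destruct (Hc k Hk); apply pow_le; lra. }
      assert (Hjm : (j <= m)%nat) by (unfold j; lia).
      assert (Hc0 : D j y0 = 0).
      { assert (HE := Claim1 j Hjm y0 ltac:(lra)). unfold E in HE.
        rewrite (sum_eq _ (fun k => c k ^ j * D j y0)) in HE.
        2:{ intros k Hk. rewrite (Hconst (c k * y0) y0); [reflexivity| |lra].
            apply scale_open; auto; lra. }
        rewrite <- scal_sum in HE.
        assert (D j y0 * (1 + sum_f_R0 (fun k => c k ^ j) (N-1)) = 0) by lra.
        apply Rmult_integral in H. destruct H; auto; lra. }
      destruct (Req_dec y 0) as [->|Hyn].
      + assert (HE := Claim1 j Hjm 0 ltac:(lra)). unfold E in HE.
        rewrite (sum_eq _ (fun k => c k ^ j * D j 0)) in HE by (intros; rewrite Rmult_0_r; reflexivity).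
        rewrite <- scal_sum in HE.
        assert (D j 0 * (1 + sum_f_R0 (fun k => c k ^ j) (N-1)) = 0) by lra.
        apply Rmult_integral in H. destruct H; auto; lra.
      + assert (HE := Claim1 j Hjm y Hy). unfold E in HE.
        rewrite (sum_eq _ (fun _ => 0)) in HE.
        2:{ intros k Hk. rewrite (Hconst (c k * y) y0); [rewrite Hc0; ring| |lra].
            apply scale_open; auto. }
        rewrite sum_cte, Rmult_0_l in HE. lra. }
  intros x Hx. rewrite <- HD0 by auto. replace 0%nat with (m - m)%nat by lia. apply Claim3; auto.
Qed.

Theorem mainTheorem1 (N : nat) (a : nat -> R) (delta : R) (m : nat) :
  (1 <= N)%nat ->
  1 < a 1%nat ->
  (forall k, (1 <= k)%nat -> (k < N)%nat -> a k < a (S k)) ->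
  0 < delta ->
  is_m_of N a m ->
  (forall f : R -> R,
      is_solution N a 0 delta f -> Cm_on m 0 delta f ->
      forall x, 0 <= x <= delta -> f x = 0) /\
  (forall f : R -> R,
      is_solution N a (- delta) 0 f -> Cm_on m (- delta) 0 f ->
      forall x, - delta <= x <= 0 -> f x = 0).
Proof.
  intros HN H1 Hmo Hd [Hmc _]. split; intros f Hs Hc.
  - apply (core N a m 0 delta (delta/2) f); auto; lra.
  - apply (core N a m (-delta) 0 (-delta/2) f); auto; lra.
Qed.
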